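(* Let $\kappa\in(0,1)$ and let $d_A>0$, $\mu>1$, $d_A'>0$, $\pi_1'\in(0,1]$, $\pi_1$, $d_S$ be real numbers satisfying \[ d_S=(\mu-1)\bigl(1-e^{-\pi_1'd_A'/(\mu-1)}\bigr),\qquad d_A=(1-\pi_1')d_A'+d_S,\qquad \pi_1=\frac{d_S}{d_A}, \] together with the ''cube root principle'' \[ \pi_1=\kappa^{1/3},\qquad 1-e^{-\pi_1'd_A'/(\mu-1)}=\kappa^{1/3}. \] Then \[ \mu=1+d_A,\qquad d_A'=d_A\bigl(1-\kappa^{1/3}-\log(1-\kappa^{1/3})\bigr),\qquad \pi_1'=\Bigl(1-\frac{1-\kappa^{1/3}}{\log(1-\kappa^{1/3})}\Bigr)^{-1}. \]
   Context: In the paper these quantities have the interpretation: $d_A$ mean degree in the agreement graph, $d_A'$ mean agreement multi-degree, $\pi_1'$ proportion of agreement multi-edges that are sibling multi-edges, $d_S$ mean number of distinct sibling neighbours, $\mu$ mean offspring of the latent tree, $\kappa$ the average local clustering coefficient; for the statement only the displayed relations matter. *)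

(* Defs.v *)
From Stdlib Require Import Reals.
Open Scope R_scope.

Definition cbrt (k : R) : R := Rpower k (1/3).

(* Main.v *)
Require Import Defs.
From Stdlib Require Import Reals Lra.
Open Scope R_scope.

Theorem lemma9p1 (kappa dA mu dA' pi1' pi1 dS : R) :
  0 < kappa < 1 ->
  0 < dA -> 1 < mu -> 0 < dA' -> 0 < pi1' <= 1 ->
  dS = (mu - 1) * (1 - exp (- (pi1' * dA') / (mu - 1))) ->
  dA = (1 - pi1') * dA' + dS ->
  pi1 = dS / dA ->
  pi1 = cbrt kappa ->
  1 - exp (- (pi1' * dA') / (mu - 1)) = cbrt kappa ->
  mu = 1 + dA /\
  dA' = dA * (1 - cbrt kappa - ln (1 - cbrt kappa)) /\
  pi1' = / (1 - (1 - cbrt kappa) / ln (1 - cbrt kappa)).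
Proof.
  intros Hk HdA Hmu HdA' Hp HdS HdA2 Hpi1 Hc HE.
  set (c := cbrt kappa) in *.
  set (y := - (pi1' * dA') / (mu - 1)) in *.
  assert (Hx : 0 < pi1' * dA') by nra.
  assert (Hy : y < 0).
  { unfold y. unfold Rdiv. assert (0 < / (mu - 1)) by (apply Rinv_0_lt_compat; lra). nra. }
  assert (HEl : exp y < 1) by (rewrite <- exp_0; apply exp_increasing; lra).
  assert (HEp : 0 < exp y) by apply exp_pos.
  assert (Hc0 : 0 < c) by lra.
  assert (Hc1 : c < 1) by lra.
  assert (HdSc : dS = c * dA).
  { rewrite Hc in Hpi1. rewrite Hpi1. field. lra. }
  assert (Hm : mu = 1 + dA).
  { rewrite HE in HdS. rewrite HdSc in HdS. 
    assert (c * (mu - 1 - dA) = 0) by lra.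
    apply Rmult_integral in H. destruct H; lra. }
  assert (HL : ln (1 - c) = y).
  { rewrite <- HE. replace (1 - (1 - exp y)) with (exp y) by ring. apply ln_exp. }
  assert (Hxy : pi1' * dA' = - dA * y).
  { unfold y in HL |- *. rewrite Hm. replace (1 + dA - 1) with dA by ring. field. lra. }
  rewrite HL.
  assert (HdA'e : dA' = dA * (1 - c - y)).
  { rewrite HdSc in HdA2. nra. }
  split; [exact Hm|]. split; [exact HdA'e|].
  assert (Hne : y <> 0) by lra.
  assert (Hd : dA * (1 - c - y) <> 0).
  { assert (0 < dA * (1 - c - y)) by nra. lra. }
  rewrite HdA'e in Hxy.
  assert (Hp' : pi1' = - y / (1 - c - y)).
  { apply (Rmult_eq_reg_r (dA * (1 - c - y))); [|exact Hd].
    unfold Rdiv. field_simplify; [|lra]. nra. }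
  rewrite Hp'. field. split; [lra|]. lra.
Qed.
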